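(* For all integers $n>1$ and $m\geq1$, $\operatorname{ecc}_{Z_{n,m}}(0)\geq\lfloor\frac{n(m+1)}{2}\rfloor$.
   Context: Elements of $\mathbb{Z}_n$ are identified with representatives in $\{0,\dots,n-1\}$. The dYoke graph $Z_{n,m}$ has vertices $u=(u_0,\dots,u_{m+1})\in\mathbb{Z}_n\times\{-1,0,1\}^m\times\mathbb{Z}_n$ with $\sum u_i\equiv0\pmod n$; $u,v$ adjacent if there is $0\leq i\leq m$ with $u_j=v_j$ for $j\notin\{i,i+1\}$ and either ($u_i=v_i+1$, $u_{i+1}=v_{i+1}-1$) or ($u_i=v_i-1$, $u_{i+1}=v_{i+1}+1$), arithmetic in coordinates $0,m+1$ in $\mathbb{Z}_n$. $\operatorname{ecc}_{Z_{n,m}}(0)$ is the maximum distance from the all-zero vertex $0$ to any vertex. *)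

(* Defs.v *)
From mathcomp Require Import all_boot all_order all_algebra.
Unset Printing Implicit Defensive.
Import Order.TTheory GRing.Theory Num.Theory.
Local Open Scope ring_scope.

(* A vertex of Z_{n,m} is encoded as an integer vector u : 'I_(m+2) -> int.
   Coordinates 0 and m+1 live in Z_n, represented by {0,...,n-1};
   coordinates 1..m lie in {-1,0,1}; the sum is divisible by n. *)
Definition is_end (m : nat) (j : nat) : bool := (j == 0%N) || (j == m.+1).

Definition dyoke_vertex (n m : nat) (u : {ffun 'I_(m.+2) -> int}) : bool :=
  [forall j : 'I_(m.+2),
     if is_end m j then (0 <= u j) && (u j < n%:Z) else (-1 <= u j) && (u j <= 1)]
  && (n%:Z %| \sum_(j < m.+2) u j)%Z.

Definition coord_eq (n m : nat) (j : nat) (a b : int) : bool :=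
  if is_end m j then (a == b %[mod n%:Z])%Z else a == b.

Definition dyoke_adj (n m : nat) : rel {ffun 'I_(m.+2) -> int} :=
  fun u v =>
    [&& dyoke_vertex n m u, dyoke_vertex n m v &
     [exists i : 'I_(m.+1),
        [forall j : 'I_(m.+2), ((val j != val i) && (val j != (val i).+1)) ==> (u j == v j)]
        && ((coord_eq n m i (u (inord i)) (v (inord i) + 1)
             && coord_eq n m i.+1 (u (inord i.+1)) (v (inord i.+1) - 1))
         || (coord_eq n m i (u (inord i)) (v (inord i) - 1)
             && coord_eq n m i.+1 (u (inord i.+1)) (v (inord i.+1) + 1)))]].

Definition dyoke_zero (m : nat) : {ffun 'I_(m.+2) -> int} := [ffun => 0].

Definition walk (T : Type) (e : rel T) (x y : T) (l : nat) : Prop :=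
  exists p : seq T, size p = l /\ path e x p /\ last x p = y.

(* dist_e(x,y) >= k  (unreachable vertices have infinite distance) *)
Definition dist_ge (T : Type) (e : rel T) (x y : T) (k : nat) : Prop :=
  forall l, walk T e x y l -> (k <= l)%N.

Definition ecc_ge (T : Type) (V : pred T) (e : rel T) (x : T) (k : nat) : Prop :=
  exists2 y, V y & dist_ge T e x y k.

(* Main.v *)
Require Import Defs.
From mathcomp Require Import all_boot all_order all_algebra.
From mathcomp Require Import zify.
Import Order.TTheory GRing.Theory Num.Theory.

Section Aux.
Local Open Scope ring_scope.

Definition ps {m : nat} (v : {ffun 'I_(m.+2) -> int}) (t : nat) : int :=
  \sum_(j < m.+2 | (j <= t)%N) v j.

Definition Sk (n m : nat) (k : int) (v : {ffun 'I_(m.+2) -> int}) : int :=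
  \sum_(t < m.+1) `|k * n%:Z - ps v t|.

Lemma sum_pt (M t i : nat) (a : int) : (i < M)%N ->
  \sum_(j < M | (j <= t)%N) (if val j == i then a else 0) =
  if (i <= t)%N then a else 0.
Proof.
move=> Hi; rewrite big_mkcond /= (bigD1 (Ordinal Hi)) //=.
have -> : (i == i) = true by apply/eqP.
rewrite big1 ?addr0 //.
move=> j Hj; case: (j <= t)%N => //; case: eqP => // Ej.
by case/eqP: Hj; apply: val_inj.
Qed.

Lemma ps_zero m t : ps (dyoke_zero m) t = 0 :> int.
Proof. by rewrite /ps big1 // => j _; rewrite ffunE. Qed.

Lemma ps_S m (v : {ffun 'I_(m.+2) -> int}) t : (t.+1 < m.+2)%N -> ps v t.+1 = ps v t + v (inord t.+1).
Proof.
move=> Ht; rewrite /ps (bigID (fun j : 'I_(m.+2) => (j <= t)%N)) /=.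
congr (_ + _).
  by apply: eq_bigl => j; case: (leqP j t) => H; lia.
apply: big_pred1 => j /=; rewrite -val_eqE /= inordK //.
by case: (leqP j t) => H /=; lia.
Qed.

Lemma ps_0 m (v : {ffun 'I_(m.+2) -> int}) : ps v 0 = v (@ord0 m.+1).
Proof.
rewrite /ps (big_pred1 ord0) // => j /=; rewrite -val_eqE /=; lia.
Qed.

Lemma step n m v w : (1 <= m)%N -> dyoke_adj n m v w ->
  forall k, exists k', Sk n m k' w <= Sk n m k v + 1.
Proof.
move=> Hm /and3P [_ _ /existsP [[i Hilt] /andP [/forallP H Hc]]] k.
simpl in H, Hc.
set di := w (inord i) - v (inord i).
set di1 := w (inord i.+1) - v (inord i.+1).
have Hi : (i < m.+2)%N by lia.
have Hi1 : (i.+1 < m.+2)%N by lia.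
have Hd : forall j : 'I_(m.+2), w j - v j =
   (if val j == i then di else 0) + (if val j == i.+1 then di1 else 0).
  move=> j; have := H j.
  case: (eqVneq (val j) i) => E1.
    have -> : j = inord i by apply: val_inj; rewrite /= inordK.
    by move=> _; rewrite /= inordK // ifN ?addr0 //; lia.
  case: (eqVneq (val j) i.+1) => E2.
    have -> : j = inord i.+1 by apply: val_inj; rewrite /= inordK.
    by move=> _; rewrite add0r.
  by move=> /implyP /(_ isT) /eqP ->; rewrite subrr addr0.
have Hps : forall t, ps w t = ps v t + (if (i <= t)%N then di else 0)
                                 + (if (i.+1 <= t)%N then di1 else 0).
  move=> t; rewrite -addrA -(sum_pt _ t _ di Hi) -(sum_pt _ t _ di1 Hi1) -big_split /=.
  rewrite /ps -big_split /=; apply: eq_bigr => j _.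
  by rewrite -Hd addrC subrK.
have [c [d [Hd1 Edi Ec Esum]]] : exists c d : int, [/\ `|d| <= 1,
   di = c * n%:Z + d, (i != 0)%N -> c = 0 &
   (i.+1 <= m)%N -> di + di1 = c * n%:Z].
  have endi : (i != 0)%N -> is_end m i = false.
    by move=> Hi0; rewrite /is_end; lia.
  have end1 : (i.+1 <= m)%N -> is_end m i.+1 = false.
    by rewrite /is_end; lia.
  case: (eqVneq i 0%N) => Ei0.
  - have e0 : is_end m i by rewrite /is_end Ei0.
    have e1 : is_end m i.+1 = false by apply: end1; rewrite Ei0.
    move: Hc; rewrite /coord_eq e0 e1 !eqz_mod_dvd.
    case/orP => /andP [/dvdzP [q Hq] /eqP H2].
    + exists (- q), (-1); split => //; rewrite /di /di1.
        by move: Hq; rewrite mulNr; lia.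
      by move=> _; move: Hq H2; rewrite mulNr; lia.
    + exists (- q), 1; split => //; rewrite /di /di1.
        by move: Hq; rewrite mulNr; lia.
      by move=> _; move: Hq H2; rewrite mulNr; lia.
  - move: Hc; rewrite /coord_eq (endi Ei0).
    case/orP => /andP [/eqP H1 H2].
    + exists 0, (-1); split => //; first by rewrite /di mul0r; lia.
      by move=> /end1 e1; move: H2; rewrite e1 /di /di1 mul0r => /eqP; lia.
    + exists 0, 1; split => //; first by rewrite /di mul0r; lia.
      by move=> /end1 e1; move: H2; rewrite e1 /di /di1 mul0r => /eqP; lia.
exists (k + c).
have Hter : forall t : 'I_(m.+1), `|(k + c) * n%:Z - ps w t| <=
     `|k * n%:Z - ps v t| + (if val t == i then 1 else 0).
  move=> t; rewrite Hps.
  case: (ltngtP t i) => Et.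
  - rewrite Ec; last by lia.
    by rewrite !addr0.
  - have Hm' : (i < m)%N by have := ltn_ord t; lia.
    rewrite -addrA Esum // addr0 mulrDl.
    by rewrite (_ : _ - _ = k * n%:Z - ps v t) //; lia.
  - rewrite addr0 Edi mulrDl.
    rewrite (_ : _ - _ = (k * n%:Z - ps v t) - d); last by lia.
    by apply: (le_trans (ler_normB _ _)); rewrite lerD2l.
rewrite /Sk (le_trans (ler_sum _ (fun t _ => Hter t))) // big_split /= lerD2l.
rewrite (bigD1 (Ordinal Hilt)) //= eqxx big1 ?addr0 // => t Ht.
by rewrite ifN //; apply: contra Ht => /eqP E; apply/eqP/val_inj.
Qed.

Lemma walk_bound n m (Hm : (1 <= m)%N) p : forall x,
  path (dyoke_adj n m) x p ->
  forall k, exists k', Sk n m k' (last x p) <= Sk n m k x + (size p)%:Z.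
Proof.
elim: p => [|z p IH] x /=.
  by move=> _ k; exists k; rewrite addr0.
move=> /andP [Hxz Hp] k.
have [k1 H1] := step n m x z Hm Hxz k.
have [k2 H2] := IH z Hp k1.
exists k2; move: H1 H2; lia.
Qed.

Definition sv (n t : nat) : nat := (n + t %% 2) %/ 2.
Definition yv (n m j : nat) : int :=
  if j == 0%N then (sv n 0)%:Z else if j == m.+1 then (n - sv n m)%:Z
  else (sv n j)%:Z - (sv n j.-1)%:Z.
Definition yy (n m : nat) : {ffun 'I_(m.+2) -> int} := [ffun j : 'I_(m.+2) => yv n m j].

Lemma ps_yy n m t : (t <= m)%N -> ps (yy n m) t = (sv n t)%:Z.
Proof.
elim: t => [|t IH] Ht.
  by rewrite ps_0 ffunE.
rewrite ps_S; last by lia.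
rewrite IH; last by lia.
rewrite ffunE inordK; last by lia.
rewrite /yv /= ifN; last by lia.
by rewrite addrC subrK.
Qed.

Lemma sumPosz M (F : nat -> nat) :
  \sum_(t < M) (F t)%:Z = (\sum_(t < M) F t)%:Z.
Proof.
elim: M => [|M IH]; first by rewrite !big_ord0.
by rewrite !big_ord_recr /= IH PoszD.
Qed.

Lemma sum_lb (f : nat -> nat) n M : (forall t, f t.*2 + f t.*2.+1 = n)%N ->
  (forall t, n %/ 2 <= f t.*2)%N -> (n * M %/ 2 <= \sum_(t < M) f t)%N.
Proof.
move=> H1 H2.
have P : forall p, (\sum_(t < p.*2) f t = n * p)%N.
  elim=> [|p IH]; first by rewrite big_ord0 muln0.
  by rewrite doubleS !big_ord_recr /= IH -addnA H1 mulnS addnC.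
move: (odd_double_half M); move: (M./2) (odd M) => q [] <- /=.
  rewrite add1n big_ord_recr /= P.
  have := H2 q; rewrite -!mul2n.
  have E : (n * (2 * q).+1 = 2 * (n * q) + n)%N by nia.
  rewrite E; lia.
rewrite add0n P -!mul2n.
have E : (n * (2 * q) = 2 * (n * q))%N by nia.
rewrite E; lia.
Qed.

Lemma Sk_lb n m k : (1 < n)%N -> ((n * m.+1 %/ 2)%N%:Z <= Sk n m k (yy n m)).
Proof.
move=> Hn.
pose f t := if k <= 0 then sv n t else (n - sv n t)%N.
have Hterm : forall t : 'I_(m.+1), (f t)%:Z <= `|k * n%:Z - ps (yy n m) t|.
  move=> t; rewrite ps_yy; last by have := ltn_ord t; lia.
  rewrite /f /sv; case: ifP => Hk.
    have : k * n%:Z <= 0 by nia.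
    by move=> Hkn; rewrite -normrN; apply: le_trans (ler_norm _); lia.
  have : n%:Z <= k * n%:Z by nia.
  by move=> Hkn; apply: le_trans (ler_norm _); lia.
apply: (le_trans _ (ler_sum _ (fun t _ => Hterm t))).
rewrite (sumPosz m.+1 f) lez_nat; apply: sum_lb => t; rewrite /f /sv -mul2n;
  case: ifP => _; lia.
Qed.

End Aux.

Theorem lemma5p16 (n m : nat) :
  (1 < n)%N -> (1 <= m)%N ->
  ecc_ge _ (dyoke_vertex n m) (dyoke_adj n m) (dyoke_zero m) (n * m.+1 %/ 2).
Proof.
move=> Hn Hm; exists (yy n m).
  apply/andP; split.
    apply/forallP => -[j Hj]; rewrite ffunE /yv /is_end /=.
    case: (eqVneq j 0%N) => [->|E0] /=.
      by rewrite /sv; try (apply/andP; split); lia.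
    case: (eqVneq j m.+1) => [E1|E1] /=.
      by subst j; rewrite /sv; try (apply/andP; split); lia.
    by rewrite /sv; try (apply/andP; split); lia.
  have -> : (\sum_(j < m.+2) yy n m j = ps (yy n m) m.+1)%R.
    by rewrite /ps; apply: eq_bigl => j; have := ltn_ord j; lia.
  rewrite ps_S // ps_yy // ffunE inordK // /yv /= eqxx.
  have -> : ((sv n m)%:Z + (n - sv n m)%N%:Z = n%:Z)%R by rewrite /sv; lia.
  exact: dvdzz.
move=> l [p [Hs [Hp Hl]]].
have [k' H] := walk_bound n m Hm p (dyoke_zero m) Hp 0.
rewrite Hl Hs in H.
have H0 : Sk n m 0 (dyoke_zero m) = 0%R.
  by rewrite /Sk big1 // => t _; rewrite ps_zero mul0r subrr normr0.
rewrite H0 add0r in H.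
have := Sk_lb n m k' Hn; move: H; lia.
Qed.
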